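(* Let $Y\in\{0,1\}$, $Z$ and $S\in\mathbb R$ be random variables on a common probability space such that $Z\perp S\mid Y$, and suppose there exists $a\in\mathbb R$ with $\mathbb P(S\le a\mid Y=1)\neq\mathbb P(S\le a\mid Y=0)$. Then $S$ is a perfect surrogate: for any measurable function $g$ of $Z$, if $Z\perp S\mid g(Z)$, then $Z\perp Y\mid g(Z)$.
   Context: A surrogate variable $S$ for $Y$ is called perfect if for every measurable function $g$ of $Z$, $Z\perp S\mid g(Z)$ implies $Z\perp Y\mid g(Z)$. *)

(* Defs.v *)
From HB Require Import structures.
From mathcomp Require Import all_boot all_order all_algebra.
From mathcomp Require Import all_classical all_reals all_analysis.
Set Implicit Arguments. Unset Strict Implicit. Unset Printing Implicit Defensive.
Import Order.TTheory GRing.Theory Num.Theory.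
Local Open Scope classical_set_scope.
Local Open Scope ring_scope.

(* By the Doob--Dynkin lemma every sigma(W)-measurable
   function is of the form k \o W with k measurable on the codomain of W. *)

Definition cond_prob_version {d dW} {Omega : measurableType d}
  {TW : measurableType dW} {R : realType} (P : probability Omega R)
  (W : Omega -> TW) (A : set Omega) (k : TW -> R) : Prop :=
  [/\ measurable_fun setT k,
      P.-integrable setT (fun w => (k (W w))%:E) &
      forall C, measurable C ->
        (\int[P]_(w in W @^-1` C) (k (W w))%:E = P (A `&` W @^-1` C))%E].

Definition cond_indep {d dX dV dW} {Omega : measurableType d}
  {TX : measurableType dX} {TV : measurableType dV} {TW : measurableType dW}
  {R : realType} (P : probability Omega R)
  (X : Omega -> TX) (V : Omega -> TV) (W : Omega -> TW) : Prop :=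
  forall (A : set TX) (B : set TV), measurable A -> measurable B ->
  forall kA kB kAB : TW -> R,
    cond_prob_version P W (X @^-1` A) kA ->
    cond_prob_version P W (V @^-1` B) kB ->
    cond_prob_version P W (X @^-1` A `&` V @^-1` B) kAB ->
    {ae P, forall w, kAB (W w) = kA (W w) * kB (W w)}.

Definition elem_cond_prob {d} {Omega : measurableType d} {R : realType}
  (P : probability Omega R) (A B : set Omega) : R :=
  fine (P (A `&` B)) / fine (P B).

(* Main.v *)
Require Import Defs.
From HB Require Import structures.
From mathcomp Require Import all_boot all_order all_algebra.
From mathcomp Require Import all_classical all_reals all_analysis.
From mathcomp Require Import ring lra measurable_realfun.
Import Order.TTheory GRing.Theory Num.Theory.
Local Open Scope classical_set_scope.
Local Open Scope ring_scope.
Section S.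
Context (R : realType) (d : measure_display) (Omega : measurableType d) (P : probability Omega R).
Definition m (E : set Omega) : R := fine (P E).
Lemma PE E : measurable E -> P E = (m E)%:E.
Proof. by move=> mE; rewrite /m fineK // fin_num_measure. Qed.
Lemma ae_pick (Q : Omega -> Prop) D : measurable D -> (0 < P D)%E ->
  {ae P, forall w, Q w} -> exists w, D w /\ Q w.
Proof.
move=> mD PD [N [mN N0 sub]].
apply: contrapT => hn.
have DN : D `<=` N.
  move=> w Dw; apply: sub => /= Qw; apply: hn; by exists w.
have : (P D <= P N)%E by apply: le_measure => //; rewrite inE.
by rewrite N0 leNgt PD.
Qed.
Lemma mpre (dT : measure_display) (T : measurableType dT) (f : Omega -> T) B :
  measurable_fun setT f -> measurable B -> measurable (f @^-1` B).
Proof. by move=> mf mB; rewrite -[_ @^-1` _]setTI; apply: mf. Qed.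
Arguments mpre {dT T f B}.
Lemma set1_meas (a : R) : measurable [set a]. Proof. exact: measurable_set1. Qed.
Lemma le_meas (a : R) : measurable [set x : R | x <= a].
Proof.
have -> : [set x : R | x <= a] = `]-oo, a]%classic.
  by apply/seteqP; split => x /=; rewrite in_itv /=.
exact: measurable_itv.
Qed.
Lemma ind_eval (a x : R) : (\1_[set a] x : R) = (x == a)%:R.
Proof. rewrite indicE; case: eqP => [->|h]; first by rewrite mem_set.
by rewrite memNset. Qed.
Lemma m0 : m set0 = 0. Proof. by rewrite /m measure0. Qed.

Lemma split_Y (Y : Omega -> R) : measurable_fun setT Y ->
  (forall w, Y w = 0 \/ Y w = 1) -> forall E, measurable E ->
  m E = m (E `&` [set w | Y w = 0]) + m (E `&` [set w | Y w = 1]).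
Proof.
move=> mY hY E mE.
have mY0 : measurable [set w | Y w = 0] by exact: (mpre mY (set1_meas 0)).
rewrite /m (measureDI P mE mY0) fineD ?fin_num_measure //; last 2 first.
- exact: measurableD.
- exact: measurableI.
rewrite addrC; congr (_ + fine (P _)).
apply/seteqP; split => w /=; first by move=> [Ew h]; split => //; case: (hY w).
by move=> [Ew h]; split => // h0; move: h; rewrite h0 => /eqP; rewrite eq_sym oner_eq0.
Qed.

Section Versions.
Context (dW : measure_display) (TW : measurableType dW) (W : Omega -> TW).
Hypothesis mW : measurable_fun setT W.

Lemma version_int E k C : measurable E -> measurable C ->
  cond_prob_version P W E k ->
  (\int[P]_(w in W @^-1` C) (k (W w))%:E = (m (E `&` W @^-1` C))%:E)%E.
Proof.
move=> mE mC [_ _ h]; rewrite h // PE //; apply: measurableI => //; exact: mpre.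
Qed.

Arguments version_int {E k C}.
Lemma version_lin E1 E2 E k1 k2 c1 c2 :
  measurable E1 -> measurable E2 -> measurable E ->
  cond_prob_version P W E1 k1 -> cond_prob_version P W E2 k2 ->
  (forall C, measurable C -> m (E `&` W @^-1` C) =
     c1 * m (E1 `&` W @^-1` C) + c2 * m (E2 `&` W @^-1` C)) ->
  cond_prob_version P W E (fun t => c1 * k1 t + c2 * k2 t).
Proof.
move=> mE1 mE2 mE h1 h2 hC.
have [mk1 ik1 _] := h1; have [mk2 ik2 _] := h2.
have eqf : (fun w => (c1 * k1 (W w) + c2 * k2 (W w))%:E) =
   (fun w => (c1%:E * (k1 (W w))%:E)%E) \+ (fun w => (c2%:E * (k2 (W w))%:E)%E).
  by apply/funext => w /=; rewrite EFinD !EFinM.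
have iT : P.-integrable setT (fun w => (c1 * k1 (W w) + c2 * k2 (W w))%:E).
  by rewrite eqf; apply: integrableD => //; apply: integrableZl.
split => //.
- apply: measurable_funD; apply: measurable_funM => //; exact: measurable_cst.
- move=> C mC.
  have mWC : measurable (W @^-1` C) by exact: mpre.
  rewrite eqf integralD //; last 2 first.
  + apply: (integrableS measurableT) => //; apply: integrableZl => //.
  + apply: (integrableS measurableT) => //; apply: integrableZl => //.
  rewrite !integralZl //; last 2 first.
  + exact: (integrableS measurableT).
  + exact: (integrableS measurableT).
  rewrite (version_int mE1 mC h1) (version_int mE2 mC h2) PE; last first.
    exact: measurableI.
  by rewrite hC // EFinD !EFinM.
Qed.

Lemma version_one : cond_prob_version P W setT (fun _ => 1).
Proof.
split.
- exact: measurable_cst.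
- exact: (finite_measure_integrable_cst P 1 measurableT).
- move=> C mC; rewrite (integral_cst P (mpre mW mC)) mul1e setTI //.
Qed.
End Versions.
Arguments version_lin {dW TW W} mW {E1 E2 E k1 k2 c1 c2}.
Arguments version_one {dW TW W} mW.
Section Ystep.
Context (Y : Omega -> R) (mY : measurable_fun setT Y) (hY : forall w, Y w = 0 \/ Y w = 1).

Definition Ys (y : R) := [set w | Y w = y].
Lemma mYs y : measurable (Ys y). Proof. exact: (mpre mY (set1_meas y)). Qed.

Lemma version_ind y : cond_prob_version P Y (Ys y) (\1_[set y] : R -> R).
Proof.
split.
- exact: measurable_indic (set1_meas y).
- exact: (integrable_indic P (mYs y)).
- move=> C mC.
  by rewrite (integral_indic P (mpre mY mC) (mYs y)).
Qed.

Definition cy y E := m (E `&` Ys y) / m (Ys y).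

Lemma piece E C y : measurable E -> measurable C -> m (Ys y) != 0 ->
  m (E `&` Y @^-1` C `&` Ys y) = cy y E * m (Ys y `&` Y @^-1` C).
Proof.
move=> mE mC hy; rewrite /cy.
have [Cy|nCy] := pselect (C y).
- have -> : E `&` Y @^-1` C `&` Ys y = E `&` Ys y.
    apply/seteqP; split => w /=; first by move=> [[]].
    by move=> [Ew Yw]; split => //; split => //; rewrite /preimage /= Yw.
  have -> : Ys y `&` Y @^-1` C = Ys y.
    apply/seteqP; split => w /=; first by move=> [].
    by move=> Yw; split => //; rewrite /preimage /= Yw.
  by rewrite divfK.
- have -> : E `&` Y @^-1` C `&` Ys y = set0.
    apply/seteqP; split => w //= [[_ Cw] Yw]; apply: nCy; by rewrite -Yw.
  have -> : Ys y `&` Y @^-1` C = set0.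
    apply/seteqP; split => w //= [Yw Cw]; apply: nCy; by rewrite -Yw.
  by rewrite m0 mulr0.
Qed.

Definition kE E (t : R) := cy 1 E * \1_[set 1] t + cy 0 E * \1_[set 0] t.

Lemma version_kE E : measurable E -> m (Ys 1) != 0 -> m (Ys 0) != 0 ->
  cond_prob_version P Y E (kE E).
Proof.
move=> mE h1 h0.
apply: (version_lin mY (mYs 1) (mYs 0) mE (version_ind 1) (version_ind 0)).
move=> C mC.
rewrite (@split_Y Y mY hY); last by apply: measurableI => //; exact: mpre.
rewrite (@piece E C 1 mE mC h1) (@piece E C 0 mE mC h0) addrC //.
Qed.

Lemma ciY (dZ : measure_display) (TZ : measurableType dZ) (Z : Omega -> TZ)
  (S : Omega -> R) (B : set R) (A : set TZ) y :
  measurable_fun setT Z -> measurable_fun setT S ->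
  cond_indep P Z S Y -> measurable B -> measurable A ->
  (0 < P (Ys 1))%E -> (0 < P (Ys 0))%E -> (y = 0 \/ y = 1) ->
  m (Z @^-1` A `&` S @^-1` B `&` Ys y) =
  m (S @^-1` B `&` Ys y) / m (Ys y) * m (Z @^-1` A `&` Ys y).
Proof.
move=> mZ mS hCI mB mA p1 p0 hy.
have h1 : m (Ys 1) != 0.
  have : ((0:R)%:E < (m (Ys 1))%:E)%E by rewrite -PE; [exact: p1|exact: mYs].
  by rewrite lte_fin => /gt_eqF ->.
have h0 : m (Ys 0) != 0.
  have : ((0:R)%:E < (m (Ys 0))%:E)%E by rewrite -PE; [exact: p0|exact: mYs].
  by rewrite lte_fin => /gt_eqF ->.
have mZA : measurable (Z @^-1` A) by exact: mpre.
have mSB : measurable (S @^-1` B) by exact: mpre.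
have mI : measurable (Z @^-1` A `&` S @^-1` B) by exact: measurableI.
have := hCI A B mA mB _ _ _ (@version_kE _ mZA h1 h0) (@version_kE _ mSB h1 h0)
  (@version_kE _ mI h1 h0).
have py : (0 < P (Ys y))%E by case: hy => ->.
have hy0 : m (Ys y) != 0 by case: hy => ->.
case/(@ae_pick _ _ (mYs y) py) => w [Yw].
rewrite /kE Yw !ind_eval /cy.
have -> : (y == 1) = (y != 0).
  by case: hy => ->; rewrite ?eqxx ?oner_eq0 // eq_sym oner_eq0.
have -> : (y == 0) = ~~ (y != 0) by rewrite negbK.
case: hy => hyv; subst y; rewrite ?eqxx ?oner_eq0 /= ?mulr0 ?mulr1 ?addr0 ?add0r => h;
  (apply: (mulIf (invr_neq0 hy0)) => /=; rewrite h; field; rewrite ?h0 ?h1 //).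
Qed.
End Ystep.
Ltac seqt := apply/seteqP; split => ? /=; tauto.

Section Main.
Context (Y : Omega -> R) (mY : measurable_fun setT Y) (hY : forall w, Y w = 0 \/ Y w = 1)
  (dZ : measure_display) (TZ : measurableType dZ) (Z : Omega -> TZ)
  (S : Omega -> R) (mZ : measurable_fun setT Z) (mS : measurable_fun setT S)
  (p1 : (0 < P (Ys Y 1))%E) (p0 : (0 < P (Ys Y 0))%E)
  (hCI : cond_indep P Z S Y)
  (dG : measure_display) (TG : measurableType dG) (g : TZ -> TG)
  (mg : measurable_fun setT g) (hCIW : cond_indep P Z S (g \o Z))
  (a : R).
Let B' := [set x : R | x <= a].
Let F y := m (S @^-1` B' `&` Ys Y y) / m (Ys Y y).
Hypothesis hF : F 1 != F 0.

Let mW : measurable_fun setT (g \o Z).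
Proof. exact: measurableT_comp. Qed.
Let mpreg C : measurable C -> measurable (g @^-1` C).
Proof. by move=> mC; rewrite -[_ @^-1` _]setTI; apply: mg. Qed.
Let ciYy A y : measurable A -> (y = 0 \/ y = 1) ->
  m (Z @^-1` A `&` S @^-1` B' `&` Ys Y y) = F y * m (Z @^-1` A `&` Ys Y y).
Proof. move=> mA hy; exact: (@ciY Y mY hY _ _ Z S B' A y mZ mS hCI (le_meas a) mA p1 p0 hy). Qed.
Let sY E := @split_Y Y mY hY E.

Lemma mainU A kA v u : measurable A ->
  cond_prob_version P (g \o Z) (Z @^-1` A) kA ->
  cond_prob_version P (g \o Z) (Ys Y 1) v ->
  cond_prob_version P (g \o Z) (Z @^-1` A `&` Ys Y 1) u ->
  {ae P, forall w, u ((g \o Z) w) = kA ((g \o Z) w) * v ((g \o Z) w)}.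
Proof.
move=> mA hA hv hu.
have mZA : measurable (Z @^-1` A) by exact: mpre.
have mSB : measurable (S @^-1` B') by exact: (mpre mS (le_meas a)).
have mY1 : measurable (Ys Y 1) by exact: mYs.
have hS := @version_lin _ _ _ mW setT (Ys Y 1) (S @^-1` B') (fun _ => 1) v
  (F 0) (F 1 - F 0) measurableT mY1 mSB (version_one mW) hv.
have hAS := @version_lin _ _ _ mW (Z @^-1` A) (Z @^-1` A `&` Ys Y 1)
  (Z @^-1` A `&` S @^-1` B') kA u (F 0) (F 1 - F 0) mZA (measurableI _ _ mZA mY1)
  (measurableI _ _ mZA mSB) hA hu.
have hS1 : cond_prob_version P (g \o Z) (S @^-1` B')
    (fun t => F 0 * 1 + (F 1 - F 0) * v t).
  apply: hS => C mC.
  have mgC := mpreg _ mC.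
  have mWC : measurable ((g \o Z) @^-1` C) by exact: mpre.
  rewrite sY; last exact: measurableI.
  rewrite (sY (setT `&` _)); last exact: measurableI.
  have e1 y : S @^-1` B' `&` (g \o Z) @^-1` C `&` Ys Y y =
     Z @^-1` (g @^-1` C) `&` S @^-1` B' `&` Ys Y y by seqt.
  have e2 y : setT `&` (g \o Z) @^-1` C `&` Ys Y y =
     Z @^-1` (g @^-1` C) `&` Ys Y y by seqt.
  have e3 : Ys Y 1 `&` (g \o Z) @^-1` C =
     Z @^-1` (g @^-1` C) `&` Ys Y 1 by seqt.
  rewrite !e1 !e2 e3 (ciYy (g @^-1` C) 0 mgC (or_introl erefl))
    (ciYy (g @^-1` C) 1 mgC (or_intror erefl)); ring.
have hAS1 : cond_prob_version P (g \o Z) (Z @^-1` A `&` S @^-1` B')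
    (fun t => F 0 * kA t + (F 1 - F 0) * u t).
  apply: hAS => C mC.
  have mgC := mpreg _ mC.
  have mWC : measurable ((g \o Z) @^-1` C) by exact: mpre.
  rewrite sY; last exact: (measurableI _ _ (measurableI _ _ mZA mSB) mWC).
  rewrite (sY (Z @^-1` A `&` _)); last exact: (measurableI _ _ mZA mWC).
  have e1 y : Z @^-1` A `&` S @^-1` B' `&` (g \o Z) @^-1` C `&` Ys Y y =
     Z @^-1` (A `&` g @^-1` C) `&` S @^-1` B' `&` Ys Y y by seqt.
  have e2 y : Z @^-1` A `&` (g \o Z) @^-1` C `&` Ys Y y =
     Z @^-1` (A `&` g @^-1` C) `&` Ys Y y by seqt.
  have e3 : Z @^-1` A `&` Ys Y 1 `&` (g \o Z) @^-1` C =
     Z @^-1` (A `&` g @^-1` C) `&` Ys Y 1 by seqt.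
  have mAC : measurable (A `&` g @^-1` C) by exact: measurableI.
  rewrite !e1 !e2 e3 (ciYy (A `&` g @^-1` C) 0 mAC (or_introl erefl))
    (ciYy (A `&` g @^-1` C) 1 mAC (or_intror erefl)); ring.
have := hCIW A B' mA (le_meas a) kA _ _ hA hS1 hAS1.
apply: filterS => w h.
apply/eqP; rewrite -subr_eq0; apply/eqP.
have hF' : F 1 - F 0 != 0 by rewrite subr_eq0.
apply: (mulfI hF'); rewrite mulr0.
transitivity ((F 0 * kA ((g \o Z) w) + (F 1 - F 0) * u ((g \o Z) w)) -
  kA ((g \o Z) w) * (F 0 * 1 + (F 1 - F 0) * v ((g \o Z) w))); first ring.
by rewrite h subrr.
Qed.
End Main.
Lemma final (dZ : measure_display) (TZ : measurableType dZ)
  (Y : Omega -> R) (Z : Omega -> TZ) (S : Omega -> R) :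
  measurable_fun setT Y -> measurable_fun setT Z -> measurable_fun setT S ->
  (forall w, Y w = 0 \/ Y w = 1) ->
  (0 < P [set w | Y w = 1%R])%E -> (0 < P [set w | Y w = 0%R])%E ->
  cond_indep P Z S Y ->
  (exists a : R,
     elem_cond_prob P [set w | S w <= a] [set w | Y w = 1%R] <>
     elem_cond_prob P [set w | S w <= a] [set w | Y w = 0%R]) ->
  forall (dG : measure_display) (TG : measurableType dG) (g : TZ -> TG),
    measurable_fun setT g ->
    cond_indep P Z S (g \o Z) -> cond_indep P Z Y (g \o Z).
Proof.
move=> mY mZ mS hY p1 p0 hCI [a ha] dG TG g mg hCIW A B mA mB kA kB kAB hA hB hAB.
have hF : (m (S @^-1` [set x | x <= a] `&` Ys Y 1) / m (Ys Y 1)) !=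
          (m (S @^-1` [set x | x <= a] `&` Ys Y 0) / m (Ys Y 0)).
  by apply/eqP; exact: ha.
have mW : measurable_fun setT (g \o Z) by exact: measurableT_comp.
have mZA : measurable (Z @^-1` A) by exact: mpre.
have [B0|nB0] := pselect (B 0); have [B1|nB1] := pselect (B 1).
- have e : Y @^-1` B = S @^-1` setT.
    by apply/seteqP; split => w //= _; case: (hY w) => ->.
  rewrite e in hB hAB.
  exact: (hCIW A setT mA measurableT kA kB kAB hA hB hAB).
- have e : Y @^-1` B = Ys Y 0.
    apply/seteqP; split => w /=; last by rewrite /Ys/preimage/= => ->.
    by rewrite /preimage/Ys/=; case: (hY w) => -> //.
  rewrite e in hB hAB.
  have mY0 := @mYs Y mY 0; have mY1 := @mYs Y mY 1.
  have hu := @version_lin _ _ _ mW (Z @^-1` A) (Z @^-1` A `&` Ys Y 0)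
    (Z @^-1` A `&` Ys Y 1) kA kAB 1 (-1) mZA (measurableI _ _ mZA mY0)
    (measurableI _ _ mZA mY1) hA hAB.
  have hv := @version_lin _ _ _ mW setT (Ys Y 0) (Ys Y 1) (fun _ => 1) kB 1 (-1)
    measurableT mY0 mY1 (version_one mW) hB.
  have hu1 : cond_prob_version P (g \o Z) (Z @^-1` A `&` Ys Y 1)
      (fun t => 1 * kA t + -1 * kAB t).
    apply: hu => C mC.
    have mWC : measurable ((g \o Z) @^-1` C) by exact: mpre.
    rewrite (@split_Y Y mY hY (Z @^-1` A `&` _)); last exact: measurableI.
    have e1 y : Z @^-1` A `&` (g \o Z) @^-1` C `&` [set w | Y w = y] =
       Z @^-1` A `&` Ys Y y `&` (g \o Z) @^-1` C by seqt.
    rewrite !e1; ring.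
  have hv1 : cond_prob_version P (g \o Z) (Ys Y 1)
      (fun t => 1 * 1 + -1 * kB t).
    apply: hv => C mC.
    have mWC : measurable ((g \o Z) @^-1` C) by exact: mpre.
    rewrite (@split_Y Y mY hY (setT `&` _)); last exact: measurableI.
    have e1 y : setT `&` (g \o Z) @^-1` C `&` [set w | Y w = y] =
       Ys Y y `&` (g \o Z) @^-1` C by seqt.
    rewrite !e1; ring.
  have := @mainU Y mY hY _ _ Z S mZ mS p1 p0 hCI _ _ g mg hCIW a hF A kA _ _ mA hA hv1 hu1.
  apply: filterS => w h.
  apply/eqP; rewrite -subr_eq0; apply/eqP.
  transitivity (kA ((g \o Z) w) * (1 * 1 + -1 * kB ((g \o Z) w)) -
    (1 * kA ((g \o Z) w) + -1 * kAB ((g \o Z) w))); first ring.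
  by rewrite h subrr.
- have e : Y @^-1` B = Ys Y 1.
    apply/seteqP; split => w /=; last by rewrite /Ys/preimage/= => ->.
    by rewrite /preimage/Ys/=; case: (hY w) => -> //.
  rewrite e in hB hAB.
  exact: (@mainU Y mY hY _ _ Z S mZ mS p1 p0 hCI _ _ g mg hCIW a hF A kA _ _ mA hA hB hAB).
- have e : Y @^-1` B = S @^-1` set0.
    by apply/seteqP; split => w //=; case: (hY w) => ->.
  rewrite e in hB hAB.
  exact: (hCIW A set0 mA measurable0 kA kB kAB hA hB hAB).
Qed.
End S.

Theorem proposition2 (R : realType) (d dZ : measure_display)
  (Omega : measurableType d) (TZ : measurableType dZ)
  (P : probability Omega R)
  (Y : Omega -> R) (Z : Omega -> TZ) (S : Omega -> R) :
  measurable_fun setT Y -> measurable_fun setT Z -> measurable_fun setT S ->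
  (forall w, Y w = 0 \/ Y w = 1) ->
  (0 < P [set w | Y w = 1%R])%E -> (0 < P [set w | Y w = 0%R])%E ->
  cond_indep P Z S Y ->
  (exists a : R,
     elem_cond_prob P [set w | S w <= a] [set w | Y w = 1%R] <>
     elem_cond_prob P [set w | S w <= a] [set w | Y w = 0%R]) ->
  forall (dG : measure_display) (TG : measurableType dG) (g : TZ -> TG),
    measurable_fun setT g ->
    cond_indep P Z S (g \o Z) -> cond_indep P Z Y (g \o Z).
Proof. exact: final. Qed.
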